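(* Let $\lambda$ be a partition of $n$. Every connected component of the graph $\mathcal A_\lambda$ contains a reverse row superstandard tabloid and a column superstandard tabloid.
   Context: Fix $n\ge1$; $\overline i=i+n\mathbb Z$, $[\overline n]=\{\overline1,\dots,\overline n\}$. A tabloid of shape $\lambda$ is a sequence $(T_1,\dots,T_k)$, $k=\ell(\lambda)$, of pairwise disjoint subsets of $[\overline n]$ with $|T_r|=\lambda_r$ and union $[\overline n]$ (row 1 highest). $\tau(T)=\{\overline i:\overline i\text{ lies in a strictly higher row than }\overline{i+1}\}$. $T,T'$ are connected by a Knuth move if $T'$ is obtained from $T$ by exchanging $\overline i$ and $\overline{i+1}$ for some $i$ and neither of $\tau(T),\tau(T')$ contains the other; $\mathcal A_\lambda$ is the graph on tabloids of shape $\lambda$ with these edges. For $i\in\mathbb Z$, the reverse row superstandard tabloid of shape $\lambda$ with start $i$ has last row $T_k=\{\overline i,\overline{i+1},\dots,\overline{i+\lambda_k-1}\}$, next row $T_{k-1}=\{\overline{i+\lambda_k},\dots,\overline{i+\lambda_k+\lambda_{k-1}-1}\}$, and so on upward. The column superstandard tabloid of shape $\lambda$ with start $i$ is obtained by filling the columns of the Young diagram of $\lambda$, left to right and each from top to bottom, with consecutive entries $\overline i,\overline{i+1},\overline{i+2},\dots$, and then taking $T_r$ to be the set of entries in row $r$. *)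

(* Defs.v *)
From Stdlib Require Import Relations.
From mathcomp Require Import all_boot.
Set Implicit Arguments. Unset Strict Implicit. Unset Printing Implicit Defensive.

(* The residues [n̄] = {1̄,...,n̄} are represented by 'I_n (x : 'I_n stands
   for the class val x + nZ).  An integer k (here a nat) denotes the class
   k mod n. *)

Definition memb {n : nat} (A : {set 'I_n}) (k : nat) : bool :=
  [exists x in A, val x == k %% n].

Definition classes_of (n : nat) (s : seq nat) : {set 'I_n} :=
  [set x : 'I_n | has (fun k => val x == k %% n) s].

Definition is_partition (lam : seq nat) (n : nat) : bool :=
  [&& sorted geq lam, all (fun l => 0 < l) lam & sumn lam == n].

(* A tabloid (T_1,...,T_k) is a seq of sets; row r (1-based) is nth set0 T (r-1);
   row 1 (index 0) is the highest. *)
Definition is_tabloid {n : nat} (lam : seq nat) (T : seq {set 'I_n}) : Prop :=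
  [/\ size T = size lam,
      (forall r, r < size T -> #|nth set0 T r| = nth 0 lam r),
      (forall r s, r < size T -> s < size T -> r != s ->
         [disjoint nth set0 T r & nth set0 T s]) &
      \bigcup_(A <- T) A = [set: 'I_n]].

Definition rowof {n : nat} (T : seq {set 'I_n}) (k : nat) : nat :=
  find (fun A => memb A k) T.

Definition tau {n : nat} (T : seq {set 'I_n}) : {set 'I_n} :=
  [set x : 'I_n | rowof T (val x) < rowof T (val x).+1].

(* transposition of the classes ī and (i+1)‾, as a map on representatives *)
Definition swapn (n i : nat) (x : nat) : nat :=
  if x %% n == i %% n then i.+1
  else if x %% n == i.+1 %% n then i else x.

Definition exchange {n : nat} (i : nat) (T : seq {set 'I_n}) : seq {set 'I_n} :=
  [seq [set x : 'I_n | memb A (swapn n i (val x))] | A <- T].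

Definition knuth_move {n : nat} (T T' : seq {set 'I_n}) : Prop :=
  exists i : nat, T' = exchange i T /\
    ~~ (tau T \subset tau T') /\ ~~ (tau T' \subset tau T).

Definition A_edge (n : nat) (lam : seq nat) (T T' : seq {set 'I_n}) : Prop :=
  [/\ is_tabloid lam T, is_tabloid lam T' & knuth_move T T'].

Definition A_connected (n : nat) (lam : seq nat) (T T' : seq {set 'I_n}) : Prop :=
  clos_refl_sym_trans _ (@A_edge n lam) T T'.

Definition rev_row_superstandard (n : nat) (lam : seq nat) (i : nat) : seq {set 'I_n} :=
  mkseq (fun r => classes_of n (iota (i + sumn (drop r.+1 lam)) (nth 0 lam r)))
        (size lam).

(* column superstandard tabloid of shape λ with start i: the cell in row r,
   column c (0-based) receives i + (#cells in columns < c) + r, where the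
   number of cells in columns < c is Σ_j min(λ_j, c). *)
Definition col_superstandard (n : nat) (lam : seq nat) (i : nat) : seq {set 'I_n} :=
  mkseq (fun r => classes_of n
          [seq i + sumn [seq minn l c | l <- lam] + r | c <- iota 0 (nth 0 lam r)])
        (size lam).

(* Main.v *)
Require Import Defs.
From Stdlib Require Import Relations.
From mathcomp Require Import all_boot zify.
Set Implicit Arguments. Unset Strict Implicit. Unset Printing Implicit Defensive.


Section Basic.
Variable n : nat.
Hypothesis Hn : 0 < n.

Definition W (T : seq {set 'I_n}) (k : nat) : nat := rowof T k.

Definition ordn (k : nat) : 'I_n := Ordinal (ltn_pmod k Hn).

Lemma memb_ord (A : {set 'I_n}) k : memb A k = (ordn k \in A).
Proof.
apply/existsP/idP => [[x /andP [xA /eqP xk]]|kA].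
  by have -> : ordn k = x by apply: val_inj.
by exists (ordn k); rewrite kA /=.
Qed.

Lemma memb_mod (A : {set 'I_n}) k : memb A (k %% n) = memb A k.
Proof. by rewrite /memb modn_mod. Qed.

Lemma W_mod T k : W T (k %% n) = W T k.
Proof. by rewrite /W /rowof; apply: eq_find => A; rewrite memb_mod. Qed.

Lemma W_modS T k : W T (k %% n).+1 = W T k.+1.
Proof. by rewrite -W_mod -addn1 modnDml addn1 W_mod. Qed.

Lemma swapn_mod i k : swapn n i (k %% n) %% n = swapn n i k %% n.
Proof. by rewrite /swapn modn_mod; case: ifP => //; case: ifP => //; rewrite modn_mod. Qed.

Lemma swapnK i k : swapn n i (swapn n i k) %% n = k %% n.
Proof.
rewrite /swapn; case: (eqVneq (k %% n) (i %% n)) => [E|E].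
  case: ifP => [/eqP ->|_]; first by [].
  by rewrite eqxx.
case: (eqVneq (k %% n) (i.+1 %% n)) => [E2|E2].
  by rewrite eqxx.
by rewrite (negPf E) (negPf E2).
Qed.

Lemma W_exchange i T k : W (exchange i T) k = W T (swapn n i k).
Proof.
rewrite /W /rowof /exchange find_map; apply: eq_find => A /=.
rewrite memb_ord inE /= -memb_mod swapn_mod memb_mod.
by [].
Qed.

Definition sig_sw i (x : 'I_n) : 'I_n := ordn (swapn n i (val x)).

Lemma sig_swK i : involutive (sig_sw i).
Proof.
move=> x; apply: val_inj => /=.
by rewrite swapn_mod swapnK modn_small.
Qed.

Lemma exchange_set i (A : {set 'I_n}) :
  [set x : 'I_n | memb A (swapn n i (val x))] = sig_sw i @^-1: A.
Proof. by apply/setP => x; rewrite !inE memb_ord. Qed.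

Lemma memb_val (A : {set 'I_n}) (x : 'I_n) : memb A (val x) = (x \in A).
Proof. by rewrite memb_ord; congr (_ \in A); apply: val_inj; rewrite /= modn_small. Qed.

End Basic.


Section Tab.
Variable n : nat.
Hypothesis Hn : 0 < n.
Variable lam : seq nat.
Implicit Types T : seq {set 'I_n}.

Lemma bigcup_has (s : seq {set 'I_n}) x :
  (x \in \bigcup_(A <- s) A) = has (fun A : {set 'I_n} => x \in A) s.
Proof.
elim: s => [|A s IH]; first by rewrite big_nil inE.
by rewrite big_cons inE IH.
Qed.

Lemma rowof_val T (x : 'I_n) : W T (val x) = find (fun A : {set 'I_n} => x \in A) T.
Proof. by rewrite /W /rowof; apply: eq_find => A; rewrite memb_val. Qed.

Lemma W_ordn T k : W T k = W T (val (ordn Hn k)).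
Proof. by rewrite /= W_mod. Qed.

Lemma tab_has T x : is_tabloid lam T -> has (fun A : {set 'I_n} => x \in A) T.
Proof. by case=> _ _ _ U; rewrite -bigcup_has U inE. Qed.

Lemma W_lt T k : is_tabloid lam T -> W T k < size T.
Proof.
move=> HT; rewrite (W_ordn T k) rowof_val.
by rewrite -has_find; apply: tab_has.
Qed.

Lemma W_row T r (x : 'I_n) : is_tabloid lam T -> r < size T ->
  (x \in nth set0 T r) = (W T (val x) == r).
Proof.
move=> HT Hr; rewrite rowof_val.
have Hh := tab_has x HT.
apply/idP/eqP => [xr|<-]; last by apply: (nth_find set0 Hh).
have Hf := nth_find set0 Hh.
case: (ltngtP (find (fun A : {set 'I_n} => x \in A) T) r) => // H.
- case: HT => _ _ D _.
  have Hd := D _ _ (ltn_trans H Hr) Hr (negbT (ltn_eqF H)).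
  by move: (disjointFr Hd Hf); rewrite xr.
- by move: (before_find set0 H); rewrite xr.
Qed.

Lemma exchange_tab i T : is_tabloid lam T -> is_tabloid lam (exchange i T).
Proof.
case=> Hs Hc Hd Hu.
have Hinj : injective (sig_sw Hn i) := inv_inj (sig_swK Hn i).
have En : forall r, r < size T -> nth set0 (exchange i T) r = sig_sw Hn i @^-1: nth set0 T r.
  by move=> r Hr; rewrite /exchange (nth_map set0) // exchange_set.
split.
- by rewrite size_map.
- move=> r; rewrite size_map => Hr; rewrite En // card_preimset //; exact: Hc.
- move=> r s; rewrite size_map => Hr Hs' Hrs; rewrite !En //.
  have := Hd r s Hr Hs' Hrs; rewrite -!setI_eq0 -preimsetI => /eqP ->.
  by rewrite preimset0.
- rewrite /exchange big_map.
  under eq_bigr do rewrite exchange_set.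
  have -> : \bigcup_(j <- T) sig_sw Hn i @^-1: j = sig_sw Hn i @^-1: \bigcup_(j <- T) j.
    elim: (T) => [|A s IH]; first by rewrite !big_nil preimset0.
    by rewrite !big_cons IH preimsetU.
  by rewrite Hu preimsetT.
Qed.

End Tab.

Lemma W_row' n (Hn : 0 < n) lam (T : seq {set 'I_n}) r (x : 'I_n) : is_tabloid lam T -> r < size T ->
  (x \in nth set0 T r) = (W T x == r).
Proof. exact: W_row. Qed.


Definition swaprel (j k : nat) : nat :=
  if k == j then j.+1 else if k == j.+1 then j else k.

Lemma swaprel_lt n j k : j.+1 < n -> k < n -> swaprel j k < n.
Proof. by rewrite /swaprel => Hj Hk; case: ifP => _; [|case: ifP => _] => //; apply: ltnW. Qed.

Section Moves.
Variable n : nat.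
Hypothesis Hn : 0 < n.
Variable lam : seq nat.
Implicit Types T : seq {set 'I_n}.

Lemma W_exch_rel T p j k : j.+1 < n -> k < n ->
  W (exchange (p + j) T) (p + k) = W T (p + swaprel j k).
Proof.
move=> Hj Hk; rewrite W_exchange // /swapn /swaprel -addnS !eqn_modDl.
rewrite !modn_small //; last by apply: ltnW.
by case: ifP => _; [rewrite addnS|case: ifP].
Qed.

Lemma tau_mem T a : (ordn Hn a \in tau T) = (W T a < W T a.+1).
Proof. by rewrite /tau inE /= -/(W T _) -/(W T _) W_mod W_modS. Qed.

Lemma move_left T p j : is_tabloid lam T -> 0 < j -> j.+1 < n ->
  W T (p + j) < W T (p + j.+1) -> W T (p + j) <= W T (p + j.-1) ->
  W T (p + j.-1) < W T (p + j.+1) ->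
  @A_edge n lam T (exchange (p + j) T).
Proof.
move=> HT Hj Hjn Hab Hac Hcb.
have Hjn' : j < n by apply: ltnW.
have Hj1 : j.-1 < n by apply: leq_ltn_trans (leq_pred j) Hjn'.
split => //; first exact: exchange_tab.
exists (p + j); split => //.
have E1 : W (exchange (p+j) T) (p + j) = W T (p + j.+1).
  by rewrite W_exch_rel // /swaprel eqxx.
have E2 : W (exchange (p+j) T) (p + j.+1) = W T (p + j).
  have H1 : (j.+1 == j) = false by apply/eqP; lia.
  by rewrite W_exch_rel // /swaprel H1 eqxx.
have E3 : W (exchange (p+j) T) (p + j.-1) = W T (p + j.-1).
  rewrite W_exch_rel // /swaprel.
  have H1 : (j.-1 == j) = false by apply/eqP; lia.
  have H2 : (j.-1 == j.+1) = false by apply/eqP; lia.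
  by rewrite H1 H2.
have Sj : (p + j.-1).+1 = p + j by rewrite -addnS prednK.
split; apply/subsetPn.
- exists (ordn Hn (p + j)); rewrite !tau_mem -addnS //.
  by rewrite E1 E2 ltnNge ltnW.
- exists (ordn Hn (p + j.-1)); rewrite !tau_mem Sj.
    by rewrite E3 E1.
  by rewrite -leqNgt.
Qed.

Lemma move_right T p j : is_tabloid lam T -> j.+2 < n ->
  W T (p + j.+1) < W T (p + j) -> W T (p + j.+1) < W T (p + j.+2) ->
  W T (p + j.+2) <= W T (p + j) ->
  @A_edge n lam T (exchange (p + j) T).
Proof.
move=> HT Hjn Hba Hbd Hda.
have Hjn1 : j.+1 < n by apply: ltnW.
have Hjn' : j < n by apply: ltnW.
split => //; first exact: exchange_tab.
exists (p + j); split => //.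
have E1 : W (exchange (p+j) T) (p + j) = W T (p + j.+1).
  by rewrite W_exch_rel // /swaprel eqxx.
have E2 : W (exchange (p+j) T) (p + j.+1) = W T (p + j).
  have H1 : (j.+1 == j) = false by apply/eqP; lia.
  by rewrite W_exch_rel // /swaprel H1 eqxx.
have E3 : W (exchange (p+j) T) (p + j.+2) = W T (p + j.+2).
  rewrite W_exch_rel // /swaprel.
  have H1 : (j.+2 == j) = false by apply/eqP; lia.
  have H2 : (j.+2 == j.+1) = false by apply/eqP; lia.
  by rewrite H1 H2.
split; apply/subsetPn.
- exists (ordn Hn (p + j.+1)); rewrite !tau_mem -!addnS //.
  by rewrite E2 E3 ltnNge Hda.
- exists (ordn Hn (p + j)); rewrite !tau_mem -!addnS.
    by rewrite E1 E2.
  by rewrite ltnNge ltnW.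
Qed.

Definition Conn (f g : nat -> nat) := forall T p, is_tabloid lam T ->
  (forall k, k < n -> W T (p + k) = f k) ->
  exists T', @A_connected n lam T T' /\ is_tabloid lam T' /\
    (forall k, k < n -> W T' (p + k) = g k).

Lemma Conn_refl f : Conn f f.
Proof. by move=> T p HT Hf; exists T; split => //; apply: rst_refl. Qed.

Lemma Conn_trans f g h : Conn f g -> Conn g h -> Conn f h.
Proof.
move=> C1 C2 T p HT Hf.
have [T1 [A1 [H1 E1]]] := C1 T p HT Hf.
have [T2 [A2 [H2 E2]]] := C2 T1 p H1 E1.
by exists T2; split => //; apply: rst_trans A2.
Qed.

Lemma Conn_ext f g g' : (forall k, k < n -> g k = g' k) -> Conn f g -> Conn f g'.
Proof.
move=> E C T p HT Hf; have [T' [A [H E']]] := C T p HT Hf.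
by exists T'; split => //; split => // k Hk; rewrite E' // E.
Qed.

Lemma Conn_left f j : 0 < j -> j.+1 < n -> f j < f j.+1 -> f j <= f j.-1 ->
  f j.-1 < f j.+1 -> Conn f (fun k => f (swaprel j k)).
Proof.
move=> Hj Hjn H1 H2 H3 T p HT Hf.
have Hjn' : j < n by apply: ltnW.
have Hj1 : j.-1 < n by apply: leq_ltn_trans (leq_pred j) Hjn'.
exists (exchange (p + j) T); split.
  apply: rst_step; apply: move_left => //; rewrite !Hf //.
split; first exact: exchange_tab.
by move=> k Hk; rewrite W_exch_rel // Hf // swaprel_lt.
Qed.

Lemma Conn_right f j : j.+2 < n -> f j.+1 < f j -> f j.+1 < f j.+2 ->
  f j.+2 <= f j -> Conn f (fun k => f (swaprel j k)).
Proof.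
move=> Hjn H1 H2 H3 T p HT Hf.
have Hjn1 : j.+1 < n by apply: ltnW.
have Hjn' : j < n by apply: ltnW.
exists (exchange (p + j) T); split.
  apply: rst_step; apply: move_right => //; rewrite !Hf //.
split; first exact: exchange_tab.
by move=> k Hk; rewrite W_exch_rel // Hf // swaprel_lt.
Qed.

End Moves.


Definition ph1 (f : nat -> nat) a s k :=
  if k == a.+1 then f (a + s.+1)
  else if (a.+1 < k) && (k <= a + s.+1) then f k.-1 else f k.

Definition ph2 (f : nat -> nat) b r k :=
  if k == b then f (b + r)
  else if (b < k) && (k <= b + r) then f k.-1 else f k.

Ltac splitifs :=
  repeat match goal with
  | |- context [if ?b then _ else _] => let H := fresh "Hif" in case H: b
  end.

Section Phases.
Variable n : nat.
Hypothesis Hn : 0 < n.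
Variable lam : seq nat.

Local Notation Conn := (@Conn n lam).

Lemma chain_le (f : nat -> nat) a s :
  (forall t, t < s -> f (a + t.+1) <= f (a + t)) ->
  forall t, t <= s -> f (a + t) <= f a.
Proof.
move=> H; elim=> [|t IH] Ht; first by rewrite addn0.
by apply: leq_trans (H t Ht) (IH (ltnW Ht)).
Qed.

Lemma phase1 s : forall f a, a + s.+1 < n ->
  (forall t, t < s -> f (a + t.+1) <= f (a + t)) ->
  f a < f (a + s.+1) -> Conn f (ph1 f a s).
Proof.
elim: s => [|s IH] f a Hn1 Hdec Hx.
  refine (Conn_ext _ (@Conn_refl n lam f)) => k Hk; rewrite /ph1.
  by splitifs => //; [congr f; lia | lia].
have Hch := chain_le Hdec.
set j := a + s.+1.
have Hj : 0 < j by lia.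
have Hjn : j.+1 < n by lia.
have E1 : j.+1 = a + s.+2 by lia.
have Hfj : f j <= f a by apply: Hch.
have Hfj1 : f j.-1 <= f a by have := Hch s (leqW (leqnn s)); rewrite /j addnS /=.
have Hfjj : f j <= f j.-1 by have := Hdec s (ltnSn s); rewrite /j addnS /=.
have Hx' : f a < f j.+1 by rewrite E1.
have C1 := @Conn_left n Hn lam _ _ Hj Hjn (leq_ltn_trans Hfj Hx') Hfjj (leq_ltn_trans Hfj1 Hx').
refine (Conn_trans C1 _).
set h := fun k => f (swaprel j k).
have Hh : forall k, k < j -> h k = f k.
  by move=> k Hk; rewrite /h /swaprel; splitifs => //; lia.
have C2 : Conn h (ph1 h a s).
  apply: IH; first by lia.
  - move=> t Ht; rewrite !Hh; try lia; apply: Hdec; lia.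
  - rewrite Hh; last by lia.
    by rewrite /h /swaprel eqxx E1.
refine (Conn_ext _ C2) => k Hk.
rewrite /ph1 /h /swaprel; splitifs; try lia; try (congr f; lia).
Qed.

Lemma phase2 r : forall f b, b + r.+1 < n ->
  (forall t, t.+1 < r -> f (b + t.+1) <= f (b + t)) ->
  (0 < r -> f (b + r.+1) <= f (b + r.-1)) ->
  f (b + r) < f (b + r.+1) -> Conn f (ph2 f b r).
Proof.
elim: r => [|r IH] f b Hn1 Hdec Hxu Hyx.
  refine (Conn_ext _ (@Conn_refl n lam f)) => k Hk; rewrite /ph2.
  by splitifs => //; [congr f; lia | lia].
set j := b + r.
have Hjn : j.+2 < n by lia.
have Ej2 : b + r.+2 = j.+2 by rewrite /j; lia.
have Ej1 : b + r.+1 = j.+1 by rewrite /j; lia.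
have Exu : f j.+2 <= f j by have := Hxu (ltn0Sn r); rewrite Ej2.
have Eyx : f j.+1 < f j.+2 by move: Hyx; rewrite Ej2 Ej1.
have C1 := @Conn_right n Hn lam _ _ Hjn (leq_trans Eyx Exu) Eyx Exu.
refine (Conn_trans C1 _).
set h := fun k => f (swaprel j k).
have Hh : forall k, k < j -> h k = f k.
  by move=> k Hk; rewrite /h /swaprel; splitifs => //; lia.
have Hj0 : h j = f j.+1 by rewrite /h /swaprel eqxx.
have Hj1 : h j.+1 = f j.
  by rewrite /h /swaprel; splitifs => //; lia.
have C2 : Conn h (ph2 h b r).
  apply: IH; first by lia.
  - move=> t Ht; rewrite !Hh; try lia; apply: Hdec; lia.
  - move=> Hr; rewrite Ej1 Hj1 Hh; last by lia.
    have := Hdec r.-1; rewrite prednK // => H; apply: H; lia.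
  - by rewrite Ej1 -/j Hj0 Hj1; exact: leq_trans Eyx Exu.
refine (Conn_ext _ C2) => k Hk.
rewrite /ph2 /h /swaprel; splitifs; try lia; try (congr f; lia).
Qed.

End Phases.



Section Alg.
Variable n : nat.
Hypothesis Hn : 0 < n.
Variable lam : seq nat.
Local Notation Conn := (@Conn n lam).

Definition Shift (f g : nat -> nat) := forall (T : seq {set 'I_n}) p, is_tabloid lam T ->
  (forall k, k < n -> W T (p + k) = f k) ->
  exists T', @A_connected n lam T T' /\ is_tabloid lam T' /\
    (forall k, k < n -> W T' (p.+1 + k) = g k).

Lemma Conn_shift f g : Conn f g -> Shift f (fun k => g (k.+1 %% n)).
Proof.
move=> C T p HT Hf; have [T' [A [H E]]] := C T p HT Hf.
exists T'; split => //; split => // k Hk.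
rewrite addSnnS.
case: (ltnP k.+1 n) => Hk1; first by rewrite E // modn_small.
have -> : k.+1 = n by apply/eqP; rewrite eqn_leq Hk1 Hk.
by rewrite modnn -W_mod modnDr W_mod -(addn0 p) E.
Qed.

Definition decseg (f : nat -> nat) L := forall j, j.+1 < L -> f j.+1 <= f j.

Lemma bumpL f L K : 0 < L -> L < n -> decseg f L -> f L.-1 < f L ->
  (forall k, k < n -> f k < K) ->
  exists f', [/\ Shift f f', decseg f' L, (forall k, k < L -> f k <= f' k),
     (exists2 j, j < L & f j < f' j) & (forall k, k < n -> f' k < K)].
Proof.
move=> HL0 HLn Hdec Hlast HK.
have Hex : exists j, (j < L) && (f j < f L) by exists L.-1; rewrite Hlast andbT; lia.
case: (ex_minnP Hex) => j0 /andP [Hj0L Hj0x] Hmin.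
have Hmin' : forall t, t < j0 -> f L <= f t.
  move=> t Ht; rewrite leqNgt; apply/negP => Hc.
  have := Hmin t; rewrite Hc andbT => H; have := H (ltn_trans Ht Hj0L); lia.
set s := L.-1 - j0.
have Es : j0 + s.+1 = L by rewrite /s; lia.
have C1 : Conn f (ph1 f j0 s).
  apply: phase1 => //; first by lia.
  - move=> t Ht; rewrite addnS; apply: Hdec; lia.
  - by rewrite Es.
set h1 := ph1 f j0 s.
have C2 : Conn h1 (ph2 h1 0 j0).
  apply: phase2 => //; first by lia.
  - move=> t Ht; rewrite /h1 /ph1 add0n; splitifs; try lia.
    apply: Hdec; lia.
  - move=> Hj; rewrite /h1 /ph1 !add0n; splitifs; try lia.
    rewrite Es; apply: Hmin'; lia.
  - rewrite /h1 /ph1 !add0n; splitifs; try lia.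
    by rewrite Es.
set g := ph2 h1 0 j0.
have Eg : forall k, k < L -> g (k.+1 %% n) = if k == j0 then f L else f k.
  move=> k Hk; rewrite modn_small; last by lia.
  rewrite /g /ph2 /h1 /ph1; splitifs; try lia; try (congr f; lia).
exists (fun k => g (k.+1 %% n)); split.
- exact: Conn_shift (Conn_trans C1 C2).
- move=> j Hj; rewrite !Eg; try lia.
  splitifs; try lia.
  + apply: Hmin'; lia.
  + have -> : j = j0 by lia.
    apply: leq_trans (ltnW Hj0x); apply: Hdec; lia.
  + by apply: Hdec.
- move=> k Hk; rewrite Eg //; case: eqP => [->|_] //; exact: ltnW.
- by exists j0 => //; rewrite Eg // eqxx.
- move=> k Hk; have Hm : k.+1 %% n < n by apply: ltn_pmod.
  move: Hm; set m := k.+1 %% n => Hm.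
  rewrite /g /ph2 /h1 /ph1; splitifs; apply: HK; lia.
Qed.

End Alg.


Lemma sum_le (f g : nat -> nat) L : (forall k, k < L -> f k <= g k) ->
  \sum_(0 <= k < L) f k <= \sum_(0 <= k < L) g k.
Proof.
elim: L => [|L IH] H; first by rewrite !big_geq.
rewrite !big_nat_recr //=; apply: leq_add; first by apply: IH => k Hk; apply: H; lia.
by apply: H.
Qed.

Lemma sum_lt (f g : nat -> nat) L j : (forall k, k < L -> f k <= g k) ->
  j < L -> f j < g j -> \sum_(0 <= k < L) f k < \sum_(0 <= k < L) g k.
Proof.
elim: L => [|L IH] H Hj Hfj; first by [].
rewrite !big_nat_recr //=.
have HL : f L <= g L by apply: H.
case: (ltnP j L) => HjL.
  have := IH (fun k Hk => H k (ltnW Hk)) HjL Hfj; lia.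
have E : j = L by lia.
rewrite E in Hfj.
have := sum_le (fun k Hk => H k (ltnW Hk)); lia.
Qed.

Lemma sum_bound (f : nat -> nat) L K : (forall k, k < L -> f k < K) ->
  \sum_(0 <= k < L) f k <= L * K.
Proof.
elim: L => [|L IH] H; first by rewrite big_geq.
rewrite big_nat_recr //= mulSn.
have := IH (fun k Hk => H k (ltnW Hk)); have := H L (ltnSn L); lia.
Qed.

Section Main.
Variable n : nat.
Hypothesis Hn : 0 < n.
Variable lam : seq nat.

Definition Phi (f : nat -> nat) L K := L * (n * K).+1 + \sum_(0 <= k < L) f k.

Lemma Phi_bound f L K : L <= n -> (forall k, k < n -> f k < K) ->
  Phi f L K <= n * (n * K).+1 + n * K.
Proof.
move=> HL HK; rewrite /Phi; apply: leq_add; first by apply: leq_mul.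
apply: leq_trans (sum_bound (f := f) (L := L) (K := K) _) _.
  by move=> k Hk; apply: HK; lia.
by apply: leq_mul.
Qed.

Lemma main_alg K : forall d f L, n * (n * K).+1 + n * K - Phi f L K <= d ->
  L <= n -> decseg f L -> (forall k, k < n -> f k < K) ->
  exists N, forall (T : seq {set 'I_n}) p, is_tabloid lam T ->
    (forall k, k < n -> W T (p + k) = f k) ->
    exists T', @A_connected n lam T T' /\ is_tabloid lam T' /\
      (forall j, j.+1 < n -> W T' (p + N + j.+1) <= W T' (p + N + j)).
Proof.
elim=> [|d IH] f L Hd HL Hdec HK.
- (* measure exhausted: L must be n *)
  case: (ltnP L n) => HLn.
    exfalso.
    have Hb := Phi_bound (L := L.+1) HLn HK.
    have : Phi f L K < Phi f L.+1 K.
      by rewrite /Phi big_nat_recr //=; lia.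
    lia.
  have HLe : L = n by lia.
  exists 0 => T p HT Hf; exists T; split; first by apply: rst_refl.
  split => // j Hj; rewrite addn0 !Hf //; last by lia.
  by apply: Hdec; lia.
case: (ltnP L n) => HLn; last first.
  have HLe : L = n by lia.
  exists 0 => T p HT Hf; exists T; split; first by apply: rst_refl.
  split => // j Hj; rewrite addn0 !Hf //; last by lia.
  by apply: Hdec; lia.
have Hbd := Phi_bound HL HK.
case Hext: ((L == 0) || (f L <= f L.-1)).
- have HL1 : L.+1 <= n by [].
  have Hb := Phi_bound HL1 HK.
  have Hgt : Phi f L K < Phi f L.+1 K by rewrite /Phi big_nat_recr //=; lia.
  have Hdec' : decseg f L.+1.
    move=> j Hj; case: (ltnP j.+1 L) => Hj2; first by apply: Hdec.
    have E : L = j.+1 by lia.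
    move: Hext; rewrite E /= => H; exact: H.
  have [N HN] := IH f L.+1 ltac:(lia) HL1 Hdec' HK.
  by exists N.
- move/negbT: Hext; rewrite negb_or -ltnNge => /andP [HL0 Hlast].
  have HL0' : 0 < L by lia.
  have [f' [Sh Hdec' Hge [j Hj Hlt] HK']] := bumpL Hn lam HL0' HLn Hdec Hlast HK.
  have Hb := Phi_bound HL HK'.
  have Hgt : Phi f L K < Phi f' L K.
    by rewrite /Phi; have := sum_lt Hge Hj Hlt; lia.
  have [N HN] := IH f' L ltac:(lia) HL Hdec' HK'.
  exists N.+1 => T p HT Hf.
  have [T1 [A1 [H1 E1]]] := Sh T p HT Hf.
  have [T2 [A2 [H2 E2]]] := HN T1 p.+1 H1 E1.
  exists T2; split; first by apply: rst_trans A2.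
  have -> : p + N.+1 = p.+1 + N by lia.
  by split => // j' Hj'; apply: E2.
Qed.

End Main.


Lemma card_ord_lt n m : m <= n -> #|[set i : 'I_n | i < m]| = m.
Proof.
move=> Hmn.
have -> : [set i : 'I_n | i < m] = [set widen_ord Hmn j | j in 'I_m].
  apply/setP => i; rewrite inE; apply/idP/imsetP => [Hi|[j _ ->]] //=.
  by exists (Ordinal Hi) => //; apply: val_inj.
rewrite card_imset ?card_ord //; move=> a b /(congr1 val) /= E; exact: val_inj.
Qed.

Section Dec.
Variable n : nat.
Hypothesis Hn : 0 < n.
Variable lam : seq nat.
Implicit Types T : seq {set 'I_n}.

Definition Sd r := sumn (drop r lam).

Lemma cardW_ge T r : is_tabloid lam T ->
  #|[set x : 'I_n | r <= W T x]| = Sd r.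
Proof.
move=> HT; have Hs : size T = size lam by case: HT.
move Hd: (size lam - r) => d; elim: d r Hd => [|d IH] r Hd.
  rewrite /Sd drop_oversize; last by lia.
  apply/eqP; rewrite cards_eq0; apply/eqP/setP => x; rewrite !inE.
  have := W_lt Hn x HT; rewrite Hs => H; apply/negbTE; rewrite -ltnNge; apply: leq_trans H _; lia.
have Hr : r < size lam by lia.
have Hc := cardsID [set x : 'I_n | W T x == r] [set x : 'I_n | r <= W T x].
have E1 : [set x : 'I_n | r <= W T x] :&: [set x : 'I_n | W T x == r] = nth set0 T r.
  apply/setP => x; rewrite !inE (W_row' Hn x HT); last by rewrite Hs.
  apply/idP/idP; lia.
have E2 : [set x : 'I_n | r <= W T x] :\: [set x : 'I_n | W T x == r] =
          [set x : 'I_n | r.+1 <= W T x].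
  apply/setP => x; rewrite !inE; apply/idP/idP; lia.
rewrite E1 E2 IH in Hc; last by lia.
case: HT => _ Hcard _ _; rewrite Hcard in Hc; last by rewrite Hs.
by rewrite -Hc /Sd (drop_nth 0 Hr).
Qed.

Lemma prefix_card (P : nat -> bool) c :
  (forall t t', t' <= t -> t < n -> P t -> P t') ->
  #|[set t : 'I_n | P t]| = c -> forall t, t < n -> P t = (t < c).
Proof.
move=> Hdown Hc t Ht; apply/idP/idP => H.
- have Hsub : [set i : 'I_n | i < t.+1] \subset [set t : 'I_n | P t].
    apply/subsetP => i; rewrite !inE => Hi; apply: (Hdown t) => //.
  have := subset_leq_card Hsub; rewrite card_ord_lt // Hc; lia.
- apply/negP => HP.
  have Hsub : [set t : 'I_n | P t] \subset [set i : 'I_n | i < t].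
    apply/subsetP => i; rewrite !inE => Hi; rewrite ltnNge; apply/negP => Hti.
    by apply: HP; apply: Hdown Hi.
  have := subset_leq_card Hsub; rewrite card_ord_lt ?Hc; lia.
Qed.

Lemma ordn_inj_rel q t t' : t < n -> t' < n -> (q + t) %% n = (q + t') %% n -> t = t'.
Proof.
move=> Ht Ht' /eqP; rewrite eqn_modDl !modn_small //; by move/eqP.
Qed.

Lemma rel_pos q v : v < n -> (q + (v + (n - q %% n)) %% n) %% n = v.
Proof.
move=> Hv; rewrite modnDmr.
have Hq := ltn_pmod q Hn.
rewrite {1}(divn_eq q n).
have -> : q %/ n * n + q %% n + (v + (n - q %% n)) = v + (q %/ n).+1 * n.
  rewrite mulSn; lia.
by rewrite addnC modnMDl modn_small.
Qed.

Lemma dec_rev_row T q : is_tabloid lam T -> sumn lam = n ->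
  (forall j, j.+1 < n -> W T (q + j.+1) <= W T (q + j)) ->
  T = rev_row_superstandard n lam q.
Proof.
move=> HT Hsum Hdec.
have Hs : size T = size lam by case: HT.
set g := fun t => W T (q + t).
have Hge : forall r t, t < n -> (r <= g t) = (t < Sd r).
  move=> r; apply: prefix_card.
    move=> t t' Htt Htn; rewrite /g => H; apply: leq_trans H _.
    elim: t Htt Htn => [|t IHt] Htt Htn; first by have -> : t' = 0 by lia.
    case: (ltnP t' t.+1) => H'.
      by apply: leq_trans (Hdec t Htn) (IHt _ _); lia.
    by have -> : t' = t.+1 by lia.
  rewrite -(cardW_ge r HT); symmetry; rewrite -(card_preimset _ (f := fun t : 'I_n => ordn Hn (q + val t))).
    by apply: eq_card => x; rewrite !inE /= W_mod.
  move=> a b /(congr1 val) /= E; apply: val_inj; apply: (ordn_inj_rel (q := q)) E; exact: ltn_ord.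
have HSn : forall i, Sd i <= n.
  move=> i; rewrite -Hsum -{1}(cat_take_drop i lam) sumn_cat /Sd; lia.
have HSi : forall i, i < size lam -> Sd i = nth 0 lam i + Sd i.+1.
  by move=> i Hi; rewrite /Sd (drop_nth 0 Hi).
have Heq : forall r0 t, t < n -> (g t == r0) = (Sd r0.+1 <= t) && (t < Sd r0).
  move=> r0 t Ht; have H1 := Hge r0 t Ht; have H2 := Hge r0.+1 t Ht.
  apply/idP/idP => [/eqP E|/andP [A B]].
    have a : t < Sd r0 by rewrite -H1 E.
    have b : ~~ (t < Sd r0.+1) by rewrite -H2 E ltnn.
    by apply/andP; split => //; rewrite leqNgt.
  have a : r0 <= g t by rewrite H1.
  have b : ~~ (r0.+1 <= g t) by rewrite H2 -leqNgt.
  apply/eqP; lia.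
apply: (eq_from_nth (x0 := set0)); first by rewrite size_mkseq Hs.
move=> i Hi; rewrite nth_mkseq; last by rewrite -Hs.
apply/setP => x; rewrite (W_row' Hn x HT Hi) inE.
set v := nat_of_ord x.
have Hv : v < n by apply: ltn_ord.
set t := (v + (n - q %% n)) %% n.
have Ht : t < n by apply: ltn_pmod.
have Eqt : (q + t) %% n = v by apply: rel_pos.
have EW : W T v = g t by rewrite /g -{1}Eqt W_mod.
rewrite EW Heq // -/(Sd i.+1).
have Hil : i < size lam by rewrite -Hs.
apply/idP/hasP => [/andP [H1 H2]|[k Hk /eqP Hvk]].
- exists (q + t); last by rewrite Eqt.
  rewrite mem_iota; have := HSi i Hil; lia.
- move: Hk; rewrite mem_iota => /andP [Hk1 Hk2].
  have Hkt : k - q < n by have := HSi i Hil; have := HSn i; lia.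
  have E : t = k - q.
    apply: (ordn_inj_rel (q := q)) => //.
    by rewrite Eqt subnKC; [|lia].
  have := HSi i Hil; rewrite E; lia.
Qed.
End Dec.


Section Col.
Variable lam : seq nat.
Hypothesis Hsort : sorted geq lam.

Definition Sc c := sumn [seq minn l c | l <- lam].
Definition cnt c := count (fun l => c < l) lam.

Lemma Sc_succ c : Sc c.+1 = Sc c + cnt c.
Proof.
rewrite /Sc /cnt; elim: lam => [|a s IH] //=; rewrite IH.
have : minn a c.+1 = minn a c + (c < a) by lia.
lia.
Qed.

Lemma Sc0 : Sc 0 = 0.
Proof. by rewrite /Sc; elim: lam => [|a s IH] //=; rewrite IH minn0. Qed.

Lemma Sc_mono c c' : c <= c' -> Sc c <= Sc c'.
Proof.
move=> H; rewrite -(subnKC H); elim: (c' - c) => [|d IH]; first by rewrite addn0.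
by rewrite addnS Sc_succ; apply: leq_trans IH (leq_addr _ _).
Qed.

Lemma Sc_big m : sumn lam <= m -> Sc m = sumn lam.
Proof.
rewrite /Sc; elim: lam => [|a s IH] //= H.
rewrite IH; last by lia.
have -> : minn a m = a by lia.
by [].
Qed.

Lemma nth_le_sum r : nth 0 lam r <= sumn lam.
Proof.
elim: lam r => [|a s IH] [|r] //=; first by apply: leq_addr.
by apply: leq_trans (IH r) (leq_addl _ _).
Qed.

Lemma nth_dec i j : i <= j -> j < size lam -> nth 0 lam j <= nth 0 lam i.
Proof.
move=> Hij Hj.
have Ht : transitive geq by move=> x y z H1 H2; apply: leq_trans H2 H1.
have Hr : reflexive geq by move=> x; apply: leqnn.
have := sorted_leq_nth Ht Hr 0 Hsort; move=> /(_ i j) H.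
by apply: H => //; rewrite inE; lia.
Qed.

Lemma cnt_iff r c : r < size lam -> (r < cnt c) = (c < nth 0 lam r).
Proof.
move=> Hr; rewrite /cnt.
apply/idP/idP => H.
- rewrite ltnNge; apply/negP => Hle.
  have H0 : count (fun l => c < l) (drop r lam) = 0.
    apply/eqP; rewrite -leqn0 leqNgt -has_count; apply/negP => /hasP [x Hx Hcx].
    move: Hx => /(nthP 0) [j Hj Ej].
    rewrite nth_drop in Ej; rewrite size_drop in Hj.
    rewrite -Ej /= in Hcx.
    have H1 := nth_dec (i := r) (j := r + j) (leq_addr _ _) ltac:(by rewrite -ltn_subRL).
    by have := leq_ltn_trans (leq_trans H1 Hle) Hcx; rewrite ltnn.
  move: H; rewrite -(cat_take_drop r lam) count_cat H0 addn0.
  have := count_size (fun l => c < l) (take r lam); rewrite size_take Hr; lia.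
- rewrite -(cat_take_drop r.+1 lam) count_cat.
  have Hall : count (fun l => c < l) (take r.+1 lam) = r.+1.
    have Hsz : size (take r.+1 lam) = r.+1 by rewrite size_take; case: ltnP; lia.
    rewrite -{2}Hsz; apply/eqP; rewrite -all_count; apply/(all_nthP 0) => j Hj.
    rewrite nth_take; last by rewrite -Hsz.
    apply: leq_trans H (nth_dec _ _); rewrite Hsz in Hj; lia.
  lia.
Qed.

Lemma cnt_le c : cnt c <= size lam.
Proof. exact: count_size. Qed.

Lemma cell_lt r c : r < size lam -> c < nth 0 lam r -> Sc c + r < Sc c.+1.
Proof. by move=> Hr Hc; rewrite Sc_succ ltn_add2l cnt_iff. Qed.

Lemma cell_inj r c r' c' : r < size lam -> c < nth 0 lam r ->
  r' < size lam -> c' < nth 0 lam r' -> Sc c + r = Sc c' + r' -> c = c' /\ r = r'.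
Proof.
move=> Hr Hc Hr' Hc' E.
case: (ltngtP c c') => Hcc.
- have := cell_lt Hr Hc; have := Sc_mono Hcc; lia.
- have := cell_lt Hr' Hc'; have := Sc_mono Hcc; lia.
- by subst; split => //; lia.
Qed.

Variable n : nat.
Hypothesis Hsum : sumn lam = n.

Lemma Sc_n : Sc n = n.
Proof. by rewrite Sc_big Hsum. Qed.

Lemma cell_n r c : c < nth 0 lam r -> Sc c.+1 <= n.
Proof.
move=> Hc; rewrite -Sc_n; apply: Sc_mono.
have := nth_le_sum r; rewrite Hsum; lia.
Qed.

Lemma colcover t : t < n -> exists r c, [/\ r < size lam, c < nth 0 lam r & t = Sc c + r].
Proof.
move=> Ht.
pose P := fun c => (c <= n) && (Sc c <= t).
have exP : exists c, P c by exists 0; rewrite /P Sc0; lia.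
have ubP : forall c, P c -> c <= n by move=> c /andP [].
case: (ex_maxnP exP ubP) => c /andP [Hcn Hct] Hmax.
have Hcn' : c < n.
  rewrite ltn_neqAle Hcn andbT; apply/eqP => E; move: Hct; rewrite E Sc_n; lia.
have Hnext : t < Sc c.+1.
  rewrite ltnNge; apply/negP => H; have := Hmax c.+1; rewrite /P Hcn' H => /(_ isT); lia.
have Hr : t - Sc c < cnt c by move: Hnext; rewrite Sc_succ; lia.
have Hrs : t - Sc c < size lam by apply: leq_trans Hr (cnt_le c).
exists (t - Sc c), c; split => //; first by rewrite -cnt_iff.
lia.
Qed.

End Col.


Section ColTab.
Variable lam : seq nat.
Hypothesis Hsort : sorted geq lam.
Variable n : nat.
Hypothesis Hn : 0 < n.
Hypothesis Hsum : sumn lam = n.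

Definition colrow s r := classes_of n [seq s + Sc lam c + r | c <- iota 0 (nth 0 lam r)].

Lemma col_def s : col_superstandard n lam s = mkseq (colrow s) (size lam).
Proof. by []. Qed.

Lemma cellpos_lt r c : r < size lam -> c < nth 0 lam r -> Sc lam c + r < n.
Proof.
move=> Hr Hc; apply: leq_trans (cell_lt Hsort Hr Hc) (cell_n Hsort Hsum Hc).
Qed.

Lemma in_colrow s r (x : 'I_n) : r < size lam ->
  (x \in colrow s r) = [exists c : 'I_(nth 0 lam r), (s + (Sc lam c + r)) %% n == x].
Proof.
move=> Hr; rewrite inE; apply/hasP/existsP => [[k /mapP [c Hc ->] /eqP Hx]|[c /eqP Hc]].
  rewrite mem_iota /= in Hc; exists (Ordinal Hc) => /=.
  by rewrite addnA Hx.
exists (s + Sc lam c + r); first by apply/mapP; exists (val c) => //; rewrite mem_iota /=.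
by rewrite -addnA Hc.
Qed.

Lemma col_tab s : is_tabloid lam (col_superstandard n lam s).
Proof.
rewrite col_def; split.
- by rewrite size_mkseq.
- move=> r; rewrite size_mkseq => Hr; rewrite nth_mkseq //.
  pose F := fun c : 'I_(nth 0 lam r) => ordn Hn (s + (Sc lam c + r)).
  have -> : colrow s r = [set F c | c in 'I_(nth 0 lam r)].
    apply/setP => x; rewrite in_colrow //; apply/existsP/imsetP => [[c /eqP Hc]|[c _ ->]].
      by exists c => //; apply: val_inj; rewrite /= Hc.
    by exists c.
  rewrite card_imset ?card_ord //.
  move=> a b /(congr1 val) /= E; apply: val_inj.
  have Ha := cellpos_lt Hr (ltn_ord a); have Hb := cellpos_lt Hr (ltn_ord b).
  have E' := ordn_inj_rel Ha Hb E.
  by case: (cell_inj Hsort Hr (ltn_ord a) Hr (ltn_ord b) E').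
- move=> r r'; rewrite size_mkseq => Hr Hr' Hrr; rewrite !nth_mkseq //.
  rewrite -setI_eq0; apply/eqP/setP => x; rewrite in_setI in_set0 !in_colrow //.
  apply/negbTE/negP => /andP [/existsP [c /eqP Hc] /existsP [c' /eqP Hc']].
  have Ha := cellpos_lt Hr (ltn_ord c); have Hb := cellpos_lt Hr' (ltn_ord c').
  have E : (s + (Sc lam c + r)) %% n = (s + (Sc lam c' + r')) %% n by rewrite Hc Hc'.
  have E' := ordn_inj_rel Ha Hb E.
  have [_ Err] := cell_inj Hsort Hr (ltn_ord c) Hr' (ltn_ord c') E'.
  by move: Hrr; rewrite Err eqxx.
- apply/setP => x; rewrite in_setT bigcup_has.
  set t := (val x + (n - s %% n)) %% n.
  have Ht : t < n by apply: ltn_pmod.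
  have Eqt : (s + t) %% n = val x by rewrite /t; apply: rel_pos => //; exact: ltn_ord.
  have [r [c [Hr Hc Et]]] := colcover Hsort Hsum Ht.
  apply/hasP; exists (colrow s r).
    by rewrite /mkseq; apply: map_f; rewrite mem_iota.
  rewrite in_colrow //; apply/existsP; exists (Ordinal Hc) => /=.
  by rewrite -Et Eqt.
Qed.

Lemma col_word s k : W (col_superstandard n lam s) (s + k) = W (col_superstandard n lam 0) k.
Proof.
rewrite /W /rowof !col_def /mkseq !find_map; apply: eq_find => r /=.
rewrite !memb_ord /=.
rewrite /colrow !inE !has_map; apply: eq_has => c /=.
by rewrite -addnA eqn_modDl add0n.
Qed.

End ColTab.


Unset Implicit Arguments.

Theorem lemma7p4 (n : nat) (lam : seq nat) :
  0 < n -> is_partition lam n ->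
  forall T : seq {set 'I_n}, is_tabloid lam T ->
    (exists i : nat, @A_connected n lam T (rev_row_superstandard n lam i)) /\
    (exists i : nat, @A_connected n lam T (col_superstandard n lam i)).
Proof.
move=> Hn Hpart T HT.
case/and3P: Hpart => Hsort _ /eqP Hsum.
have HK : forall (U : seq {set 'I_n}) k, is_tabloid lam U -> W U k < size lam.
  by move=> U k HU; have := W_lt Hn k HU; case: HU => -> _ _ _.
set M := n * (n * size lam).+1 + n * size lam.
have [N HN] := @main_alg n Hn lam (size lam) M (fun k => W T k) 0 (leq_subr _ _)
  (leq0n n) (fun j Hj => False_ind _ (notF Hj)) (fun k _ => HK T k HT).
have [T' [A1 [HT' Hd1]]] := HN T 0 HT (fun k _ => erefl).
have E1 : T' = rev_row_superstandard n lam N.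
  apply: (dec_rev_row Hn HT' Hsum) => j Hj; move: (Hd1 j Hj); by rewrite add0n.
split; first by exists N; rewrite -E1.
have Hc0 := col_tab Hsort Hn Hsum 0.
have [Nc HNc] := @main_alg n Hn lam (size lam) M
  (fun k => W (col_superstandard n lam 0) k) 0 (leq_subr _ _)
  (leq0n n) (fun j Hj => False_ind _ (notF Hj)) (fun k _ => HK _ k Hc0).
set s := N + (n - Nc %% n).
have [Tc [A2 [HTc Hd2]]] := HNc (col_superstandard n lam s) s (col_tab Hsort Hn Hsum s)
  (fun k _ => col_word lam Hn s k).
have Hmod : forall m, W Tc (s + Nc + m) = W Tc (N + m).
  move=> m; rewrite -W_mod // -[in RHS]W_mod //; congr (W Tc _).
  have -> : s + Nc + m = (N + m) + (Nc %/ n).+1 * n.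
    rewrite /s {2}(divn_eq Nc n) mulSn; have := ltn_pmod Nc Hn; lia.
  by rewrite addnC modnMDl.
have E2 : Tc = rev_row_superstandard n lam N.
  apply: (dec_rev_row Hn HTc Hsum) => j Hj; rewrite -!Hmod; exact: Hd2.
exists s; apply: rst_trans A1 _; rewrite E1 -E2; exact: rst_sym A2.
Qed.
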